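(* Let $\mathcal{N}\in\mathbb{C}^{n\times n}$ be Hermitian positive definite. Then the projection $\Pi(P_\sharp,R_\sharp)=P_\sharp(R_\sharp^*AP_\sharp)^{-1}R_\sharp^*A$ is $\mathcal{N}$-orthogonal if and only if $\mathcal{N}$ can be written in the form $\mathcal{N}=V_r^{-*}\widetilde{\mathcal{D}}^*\widetilde{\mathcal{D}}V_r^{-1}$ for some invertible block-diagonal matrix $$\widetilde{\mathcal{D}}=\begin{bmatrix}\mathcal{U}_{cc}&0\\0&\mathcal{U}_{ff}\end{bmatrix},$$ where $\mathcal{U}_{cc}\in\mathbb{C}^{n_c\times n_c}$ and $\mathcal{U}_{ff}\in\mathbb{C}^{n_f\times n_f}$ are upper triangular.
   Context: Let $A,M\in\mathbb{C}^{n\times n}$ be nonsingular with $M^{-1}A$ and $M^{-*}A^*$ diagonalizable. Let $V_r=[\bm v_{r,1},\dots,\bm v_{r,n}]$ and $V_l=[\bm v_{l,1},\dots,\bm v_{l,n}]$ be invertible matrices of right and left generalized eigenvectors of the pencil $(A,M)$, i.e. $AV_r=MV_r\Lambda$ and $V_l^*A=\Lambda V_l^*M$ with $\Lambda=\mathrm{diag}(\lambda_1,\dots,\lambda_n)$, chosen so that $V_l^*AV_r=D_a$ and $V_l^*MV_r=D_m$ are diagonal, and with the eigenvalues ordered so that $|1-\lambda_1|\ge|1-\lambda_2|\ge\cdots\ge|1-\lambda_n|\ge0$. Fix $n_c\in\{1,\dots,n\}$ and $n_f=n-n_c$. $P_\sharp,R_\sharp\in\mathbb{C}^{n\times n_c}$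 are any matrices with $\mathrm{range}(P_\sharp)=\mathrm{span}\{\bm v_{r,1},\dots,\bm v_{r,n_c}\}$ and $\mathrm{range}(R_\sharp)=\mathrm{span}\{\bm v_{l,1},\dots,\bm v_{l,n_c}\}$ (then $R_\sharp^*AP_\sharp$ is invertible). For Hermitian positive definite $\mathcal{N}$, $\langle x,y\rangle_{\mathcal N}=y^*\mathcal N x$; a matrix $Z$ is $\mathcal N$-orthogonal if $\langle Zx,y\rangle_{\mathcal N}=\langle x,Zy\rangle_{\mathcal N}$ for all $x,y\in\mathbb{C}^n$. *)

(* Defs.v *)
From HB Require Import structures.
From mathcomp Require Import all_boot all_order all_algebra.
From mathcomp Require Export complex.
From mathcomp Require Import reals.
Set Implicit Arguments. Unset Strict Implicit. Unset Printing Implicit Defensive.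
Import Order.TTheory GRing.Theory Num.Theory.
Local Open Scope ring_scope.

Definition ctr {C : numClosedFieldType} {m n : nat} (A : 'M[C]_(m, n)) : 'M[C]_(n, m) :=
  (map_mx Num.conj A)^T.

Definition hpd {C : numClosedFieldType} {n : nat} (N : 'M[C]_n) : Prop :=
  ctr N = N /\ forall x : 'cV[C]_n, x != 0 -> 0 < (ctr x *m N *m x) 0 0.

Definition ipN {C : numClosedFieldType} {n : nat} (N : 'M[C]_n) (x y : 'cV[C]_n) : C :=
  (ctr y *m N *m x) 0 0.

Definition N_orthogonal {C : numClosedFieldType} {n : nat} (N Z : 'M[C]_n) : Prop :=
  forall x y : 'cV[C]_n, ipN N (Z *m x) y = ipN N x (Z *m y).

Definition upper_triangular {C : numClosedFieldType} {n : nat} (U : 'M[C]_n) : Prop :=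
  forall i j : 'I_n, (j < i)%N -> U i j = 0.

Definition Pi {C : numClosedFieldType} {n nc : nat} (A : 'M[C]_n) (P R : 'M[C]_(n, nc)) : 'M[C]_n :=
  P *m invmx (ctr R *m A *m P) *m ctr R *m A.

(* Main.v *)
Require Import Defs.
From HB Require Import structures.
From mathcomp Require Import all_boot all_order all_algebra.
From mathcomp Require Import complex reals.
Import Order.TTheory GRing.Theory Num.Theory.
Local Open Scope ring_scope.
Section S.
Set Implicit Arguments. Unset Strict Implicit.
Variable C : numClosedFieldType.
Implicit Types (c : C).
Lemma ctr_mul m n p (A : 'M[C]_(m,n)) (B : 'M[C]_(n,p)) : ctr (A *m B) = ctr B *m ctr A.
Proof. by rewrite /ctr map_mxM trmx_mul. Qed.
Lemma ctrK m n (A : 'M[C]_(m,n)) : ctr (ctr A) = A.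
Proof. by apply/matrixP=> i j; rewrite /ctr !mxE conjCK. Qed.
Lemma ctr_block m1 m2 n1 n2 (a : 'M[C]_(m1,n1)) (b : 'M[C]_(m1,n2)) (c : 'M[C]_(m2,n1)) (d : 'M[C]_(m2,n2)) :
  ctr (block_mx a b c d) = block_mx (ctr a) (ctr c) (ctr b) (ctr d).
Proof. by rewrite /ctr map_block_mx tr_block_mx. Qed.
Lemma ctr0 m n : ctr (0 : 'M[C]_(m,n)) = 0.
Proof. by rewrite /ctr map_mx0 trmx0. Qed.
Lemma ctr_scalar n c : ctr (c%:M : 'M[C]_n) = (c^*)%:M.
Proof. by rewrite /ctr map_scalar_mx tr_scalar_mx. Qed.
Lemma ctr1 n : ctr (1%:M : 'M[C]_n) = 1%:M.
Proof. by rewrite ctr_scalar conjC1. Qed.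
Lemma ctrZ m n c (A : 'M[C]_(m,n)) : ctr (c *: A) = c^* *: ctr A.
Proof. by apply/matrixP=> i j; rewrite /ctr !mxE rmorphM. Qed.
Lemma ctrD m n (A B : 'M[C]_(m,n)) : ctr (A + B) = ctr A + ctr B.
Proof. by apply/matrixP=> i j; rewrite /ctr !mxE rmorphD. Qed.
Lemma ctrN m n (A : 'M[C]_(m,n)) : ctr (- A) = - ctr A.
Proof. by apply/matrixP=> i j; rewrite /ctr !mxE rmorphN. Qed.
Lemma ctr_unit n (A : 'M[C]_n) : (ctr A \in unitmx) = (A \in unitmx).
Proof. by rewrite /ctr unitmx_tr map_unitmx. Qed.
Lemma ctr_inv n (A : 'M[C]_n) : ctr (invmx A) = invmx (ctr A).
Proof. by rewrite /ctr map_invmx trmx_inv. Qed.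
Lemma ctr_delta n (i : 'I_n) : ctr (delta_mx i 0 : 'cV[C]_n) = delta_mx 0 i.
Proof. by apply/matrixP=> a b; rewrite /ctr !mxE rmorph_nat andbC. Qed.

Lemma entry_delta n (K : 'M[C]_n) (i j : 'I_n) :
  (ctr (delta_mx i 0 : 'cV[C]_n) *m K *m (delta_mx j 0 : 'cV[C]_n)) 0 0 = K i j.
Proof. rewrite ctr_delta. rewrite -rowE. rewrite -colE. by rewrite !mxE. Qed.

Lemma orthP n (N Z : 'M[C]_n) : N_orthogonal N Z <-> N *m Z = ctr Z *m N.
Proof.
rewrite /N_orthogonal /ipN; split=> [H|H x y].
  apply/matrixP=> i j; rewrite -(entry_delta (N *m Z) i j) -(entry_delta (ctr Z *m N) i j).
  by have := H (delta_mx j 0) (delta_mx i 0); rewrite ctr_mul !mulmxA.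
by rewrite ctr_mul !mulmxA -(mulmxA _ N) H !mulmxA.
Qed.
Lemma ctr_col m1 m2 n (A : 'M[C]_(m1,n)) (B : 'M[C]_(m2,n)) :
  ctr (col_mx A B) = row_mx (ctr A) (ctr B).
Proof. by rewrite /ctr map_col_mx tr_col_mx. Qed.

Lemma ctr_hermE m1 m2 (G : 'M[C]_(m1 + m2)) : ctr G = G ->
  [/\ ctr (ulsubmx G) = ulsubmx G, ctr (drsubmx G) = drsubmx G,
      ctr (ursubmx G) = dlsubmx G & ctr (dlsubmx G) = ursubmx G].
Proof.
by rewrite -{1 2}[G]submxK ctr_block => /eq_block_mx[-> -> -> ->].
Qed.

Lemma mulGcol m1 m2 p (G : 'M[C]_(m1+m2)) (x1 : 'M[C]_(m1,p)) (x2 : 'M[C]_(m2,p)) :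
  G *m col_mx x1 x2 = col_mx (ulsubmx G *m x1 + ursubmx G *m x2) (dlsubmx G *m x1 + drsubmx G *m x2).
Proof. by rewrite -{1}[G]submxK mul_block_col. Qed.

Lemma chol k (G : 'M[C]_k) : hpd G ->
  exists U, [/\ upper_triangular U, U \in unitmx & G = ctr U *m U].
Proof.
elim: k G => [|k IH] G [hG pG].
  exists 1%:M; split; first by move=> [].
    by rewrite unitmx1.
  by apply/matrixP=> -[].
move: G hG pG; rewrite -[k.+1]/(1 + k)%N => G hG pG.
have [hul hdr hur hdl] := ctr_hermE hG.
pose a := ulsubmx G 0 0.
have ha : ulsubmx G = a%:M by apply: mx11_scalar.
have a_gt0 : 0 < a.
  have x0 : col_mx (1%:M : 'M[C]_1) (0 : 'cV_k) != 0.
    apply/eqP => /(congr1 usubmx); rewrite col_mxKu => /matrixP/(_ 0 0).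
    by rewrite !mxE /= => /eqP; rewrite oner_eq0.
  have := pG _ x0; rewrite -mulmxA mulGcol ctr_col ctr1 ctr0 mul_row_col.
  by rewrite !mulmx0 !addr0 mul0mx addr0 mul1mx mulmx1.
have a_neq0 : a != 0 by rewrite gt_eqF.
have ca : a^* = a by rewrite geC0_conj // ltW.
pose S := drsubmx G - a^-1 *: (dlsubmx G *m ursubmx G).
have hS : hpd S.
  split.
    rewrite /S ctrD ctrN ctrZ ctr_mul hdr hur hdl fmorphV; congr (_ - _^-1 *: _); exact: ca.
  move=> x x0.
  pose y := col_mx (- a^-1 *: (ursubmx G *m x)) x.
  have y0 : y != 0.
    by apply: contraNneq x0 => /(congr1 dsubmx); rewrite col_mxKd => ->; rewrite linear0.
  have := pG _ y0; rewrite -mulmxA mulGcol ha mul_scalar_mx scalerA mulrN mulfV //.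
  rewrite scaleN1r addNr ctr_col mul_row_col mulmx0 add0r.
  by rewrite -scalemxAr scaleNr /S -mulmxA mulmxDl mulNmx -scalemxAl mulmxA addrC.
have [U' [uU' unU' eS]] := IH S hS.
pose s := sqrtC a.
have s_gt0 : 0 < s by rewrite sqrtC_gt0.
have s_neq0 : s != 0 by rewrite gt_eqF.
have cs : s^* = s by rewrite geC0_conj // ltW.
have hs : s * s = a by rewrite -expr2 sqrtCK.
have csV : (s^-1)^* = s^-1.
  rewrite fmorphV; congr (_^-1); exact: cs.
exists (block_mx s%:M (s^-1 *: ursubmx G) 0 U'); split.
- move=> i j; rewrite -(splitK i) -(splitK j).
  case: (split i) => i0; case: (split j) => j0 /=.
  + by rewrite (ord1 i0) (ord1 j0).
  + by rewrite (ord1 i0).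
  + by rewrite block_mxEdl mxE.
  + by rewrite block_mxEdr ltn_add2l => /uU'.
- by rewrite unitmxE det_ublock det_scalar1 unitrM unitfE s_neq0 -unitmxE.
- rewrite ctr_block ctr_scalar ctr0 ctrZ mulmx_block !mul0mx !addr0.
  rewrite -{1}[G]submxK; congr block_mx.
  + by rewrite -scalar_mxM ha cs hs.
  + by rewrite mul_scalar_mx scalerA cs mulfV // scale1r.
  + by rewrite mulmx0 addr0 hur mul_mx_scalar scalerA csV mulfV // scale1r.
  + rewrite hur -scalemxAl -scalemxAr scalerA -eS /S csV -invfM hs.
    by rewrite addrC subrK.
Qed.
Lemma invmxM n (X Y : 'M[C]_n) : X \in unitmx -> Y \in unitmx ->
  invmx (X *m Y) = invmx Y *m invmx X.
Proof.
move=> Xu Yu.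
have h1 : X *m Y *m (invmx Y *m invmx X) = 1%:M by rewrite mulmxA mulmxK // mulmxV.
by rewrite -[invmx (X *m Y)]mulmx1 -h1 mulmxA mulVmx ?unitmx_mul ?Xu ?Yu // mul1mx.
Qed.

Lemma ctr_row m n1 n2 (A : 'M[C]_(m,n1)) (B : 'M[C]_(m,n2)) :
  ctr (row_mx A B) = col_mx (ctr A) (ctr B).
Proof. by rewrite /ctr map_row_mx tr_row_mx. Qed.

Lemma Pi_eq n1 n2 (A Vr Vl : 'M[C]_(n1+n2)) (P R : 'M[C]_(n1+n2, n1)) :
  A \in unitmx -> Vr \in unitmx -> Vl \in unitmx -> is_diag_mx (ctr Vl *m A *m Vr) ->
  (P^T :=: (lsubmx Vr)^T)%MS -> (R^T :=: (lsubmx Vl)^T)%MS ->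
  Pi A P R = Vr *m block_mx 1%:M 0 0 0 *m invmx Vr.
Proof.
move=> Au Vru Vlu dg eP eR.
have /eqmxMunitP[X Xu hX] : (P^T == (lsubmx Vr)^T)%MS by apply/eqmxP.
have /eqmxMunitP[Y Yu hY] : (R^T == (lsubmx Vl)^T)%MS by apply/eqmxP.
have -> : P = lsubmx Vr *m X^T by rewrite -[P]trmxK hX trmx_mul trmxK.
have -> : R = lsubmx Vl *m Y^T by rewrite -[R]trmxK hY trmx_mul trmxK.
set L := lsubmx Vr; set Lr := rsubmx Vr; set K := lsubmx Vl; set Kr := rsubmx Vl.
have eVr : Vr = row_mx L Lr by rewrite hsubmxK.
have eVl : ctr Vl = col_mx (ctr K) (ctr Kr) by rewrite -ctr_row hsubmxK.
have eDa : ctr Vl *m A *m Vr = block_mx (ctr K *m A *m L) (ctr K *m A *m Lr)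
     (ctr Kr *m A *m L) (ctr Kr *m A *m Lr).
  by rewrite eVl {1}eVr mul_col_mx mul_col_row.
have Z0 : ctr K *m A *m Lr = 0.
  apply/matrixP => i j; move/is_diag_mxP: dg => dg.
  have := dg (lshift n2 i) (rshift n1 j); rewrite eDa block_mxEur !mxE => -> //.
  by rewrite /= neq_ltn ltn_addr.
have Du : ctr K *m A *m L \in unitmx.
  have : ctr Vl *m A *m Vr \in unitmx by rewrite !unitmx_mul ctr_unit Vlu Au Vru.
  by rewrite eDa Z0 !unitmxE det_lblock unitrM => /andP[].
set D := ctr K *m A *m L.
have eQ : ctr (Y^T) *m ctr K *m A *m (L *m X^T) = ctr (Y^T) *m D *m X^T by rewrite /D !mulmxA.
have eKA : ctr K *m A = row_mx D 0 *m invmx Vr.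
  by rewrite -Z0 /D -mul_mx_row -eVr mulmxK.
rewrite /Pi ctr_mul eQ invmxM ?unitmx_mul ?ctr_unit ?unitmx_tr ?Yu ?Du //.
rewrite invmxM ?ctr_unit ?unitmx_tr //.
rewrite !mulmxA mulmxK ?unitmx_tr // mulmxKV ?ctr_unit ?unitmx_tr //.
rewrite -mulmxA eKA mulmxA mul_mx_row mulmxKV // mulmx0.
by rewrite [X in X *m block_mx _ _ _ _]eVr mul_row_block mulmx1 !mulmx0 addr0 add0r.
Qed.
Lemma commE m1 m2 (G : 'M[C]_(m1+m2)) :
  G *m block_mx 1%:M 0 0 0 = block_mx 1%:M 0 0 0 *m G <-> ursubmx G = 0 /\ dlsubmx G = 0.
Proof.
rewrite -[G]submxK !mulmx_block !mulmx1 !mul1mx !mulmx0 !mul0mx !addr0 !block_mxKur !block_mxKdl.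
split; first by move/eq_block_mx=> [_ <- -> _].
by move=> [-> ->].
Qed.

Lemma hpd_sub m1 m2 (G : 'M[C]_(m1+m2)) : hpd G -> hpd (ulsubmx G) /\ hpd (drsubmx G).
Proof.
move=> [hG pG]; have [hul hdr _ _] := ctr_hermE hG; split; split => // x x0.
  have y0 : col_mx x (0 : 'cV_m2) != 0.
    by apply: contraNneq x0 => /(congr1 usubmx); rewrite col_mxKu => ->; rewrite linear0.
  have := pG _ y0; rewrite -mulmxA mulGcol ctr_col ctr0 mul_row_col mul0mx addr0.
  by rewrite mulmx0 addr0 mulmxA.
have y0 : col_mx (0 : 'cV_m1) x != 0.
  by apply: contraNneq x0 => /(congr1 dsubmx); rewrite col_mxKd => ->; rewrite linear0.
have := pG _ y0; rewrite -mulmxA mulGcol ctr_col ctr0 mul_row_col mul0mx add0r.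
by rewrite mulmx0 add0r mulmxA.
Qed.

Lemma main_gen n1 n2 (A Vr Vl : 'M[C]_(n1+n2)) (P R : 'M[C]_(n1+n2, n1)) (N : 'M[C]_(n1+n2)) :
  A \in unitmx -> Vr \in unitmx -> Vl \in unitmx -> is_diag_mx (ctr Vl *m A *m Vr) ->
  (P^T :=: (lsubmx Vr)^T)%MS -> (R^T :=: (lsubmx Vl)^T)%MS -> hpd N ->
  N_orthogonal N (Pi A P R) <->
  exists (Ucc : 'M[C]_n1) (Uff : 'M[C]_n2),
    [/\ upper_triangular Ucc, upper_triangular Uff,
        block_mx Ucc 0 0 Uff \in unitmx &
        N = ctr (invmx Vr) *m ctr (block_mx Ucc 0 0 Uff)
              *m block_mx Ucc 0 0 Uff *m invmx Vr].
Proof.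
move=> Au Vru Vlu dg eP eR [hN pN].
rewrite orthP (Pi_eq Au Vru Vlu dg eP eR).
set E := block_mx 1%:M 0 0 0.
set W := invmx Vr.
set G := ctr Vr *m N *m Vr.
have cE : ctr E = E by rewrite /E ctr_block ctr1 !ctr0.
have cWV : ctr W *m ctr Vr = 1%:M by rewrite -ctr_mul mulmxV // ctr1.
have WV : W *m Vr = 1%:M by rewrite mulVmx.
have VW : Vr *m W = 1%:M by rewrite mulmxV.
have cVW : ctr Vr *m ctr W = 1%:M by rewrite -ctr_mul WV ctr1.
have NG : N = ctr W *m G *m W.
  by rewrite /G !mulmxA cWV mul1mx -mulmxA VW mulmx1.
have key : (N *m (Vr *m E *m W) = ctr (Vr *m E *m W) *m N) <-> (G *m E = E *m G).
  rewrite !ctr_mul cE; split => H.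
    have := congr1 (fun Z => ctr Vr *m Z *m Vr) H => /=.
    rewrite /G !mulmxA -!(mulmxA _ W Vr) WV !mulmx1.
    by rewrite cVW mul1mx.
  have NV : N *m Vr = ctr W *m G by rewrite /G !mulmxA cWV mul1mx.
  have VN : ctr Vr *m N = G *m W by rewrite /G -mulmxA VW mulmx1.
  rewrite !mulmxA NV -(mulmxA _ (ctr Vr) N) VN.
  by have := congr1 (fun Z => ctr W *m Z *m W) H; rewrite /G !mulmxA.
rewrite key commE.
have hG : hpd G.
  split; first by rewrite /G !ctr_mul ctrK hN mulmxA.
  move=> x x0; have y0 : Vr *m x != 0.
    apply: contraNneq x0 => e; by rewrite -(mulKmx Vru x) e mulmx0.
  by have := pN _ y0; rewrite /G ctr_mul !mulmxA.
split.
- move=> [gur gdl]; have [h1 h2] := hpd_sub hG.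
  have [Ucc [u1 un1 e1]] := chol h1; have [Uff [u2 un2 e2]] := chol h2.
  exists Ucc, Uff; split => //.
    by rewrite unitmxE det_ublock unitrM -!unitmxE un1 un2.
  rewrite NG -(mulmxA (ctr W) (ctr _)); congr (ctr W *m _ *m W).
  rewrite ctr_block !ctr0 mulmx_block !mulmx0 !mul0mx !addr0 add0r.
  by rewrite -[G]submxK gur gdl -e1 -e2.
- move=> [Ucc [Uff [_ _ _ eN]]].
  rewrite /G eN !mulmxA cVW mul1mx -mulmxA WV mulmx1.
  rewrite ctr_block !ctr0 mulmx_block !mulmx0 !mul0mx !addr0 add0r.
  by rewrite block_mxKur block_mxKdl.
Qed.
End S.

Theorem theorem3p1 (R : realType) (nc nf : nat) (hnc : (0 < nc)%N)
  (A M Vr Vl : 'M[R[i]]_(nc + nf)) (lam : 'rV[R[i]]_(nc + nf))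
  (Psh Rsh : 'M[R[i]]_(nc + nf, nc)) (N : 'M[R[i]]_(nc + nf)) :
  A \in unitmx -> M \in unitmx ->
  diagonalizable (invmx M *m A) ->
  diagonalizable (invmx (ctr M) *m ctr A) ->
  Vr \in unitmx -> Vl \in unitmx ->
  A *m Vr = M *m Vr *m diag_mx lam ->
  ctr Vl *m A = diag_mx lam *m ctr Vl *m M ->
  is_diag_mx (ctr Vl *m A *m Vr) ->
  is_diag_mx (ctr Vl *m M *m Vr) ->
  (forall i j : 'I_(nc + nf), (i <= j)%N -> `|1 - lam 0 j| <= `|1 - lam 0 i|) ->
  ((Psh^T) :=: (lsubmx Vr)^T)%MS ->
  ((Rsh^T) :=: (lsubmx Vl)^T)%MS ->
  hpd N ->
  N_orthogonal N (Pi A Psh Rsh) <->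
  exists (Ucc : 'M[R[i]]_nc) (Uff : 'M[R[i]]_nf),
    [/\ upper_triangular Ucc, upper_triangular Uff,
        block_mx Ucc 0 0 Uff \in unitmx &
        N = ctr (invmx Vr) *m ctr (block_mx Ucc 0 0 Uff)
              *m block_mx Ucc 0 0 Uff *m invmx Vr].
Proof.
move=> Au _ _ _ Vru Vlu _ _ dg _ _ eP eR hN.
exact: (main_gen Au Vru Vlu dg eP eR hN).
Qed.
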